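(* Let $p$ be a prime and $G$ a $p$-group of maximal class of order $p^m$ ($m\ge 4$) with positive degree of commutativity. (1) If $G$ possesses an abelian maximal subgroup, then $$A_G(t)=\frac{1}{p^m}\left(\frac{p}{1-p^mt}+\frac{p^m-p^{m-1}}{1-p^2t}+\frac{p^{m-1}-p}{1-p^{m-1}t}\right).$$ (2) If $[P_1,P_3]=1$ and $G$ possesses no abelian maximal subgroup, then $$A_G(t)=\frac{1}{p^m}\left(\frac{p}{1-p^mt}+\frac{p^m-p^{m-1}}{1-p^2t}+\frac{p^{m-1}-p^{m-3}}{1-p^{m-2}t}+\frac{p^{m-3}-p}{1-p^{m-1}t}\right).$$
   Context: For a finite group $G$ and $n\ge0$, let $\alpha_{G,n}$ be the number of orbits of $G$ acting on $G^n$ by simultaneous conjugation, and $A_G(t)=\sum_{n\ge0}\alpha_{G,n}t^n$. A group of order $p^m$ with $m\ge4$ is of maximal class if it has nilpotency class $m-1$. Let $\gamma_i(G)$ be the lower central series ($\gamma_1(G)=G$, $\gamma_{i+1}(G)=[\gamma_i(G),G]$). Define $P_0=G$, $P_1$ to be the centralizer in $G$ of $\gamma_2(G)/\gamma_4(G)$ (i.e. $\{g\in G: [g,\gamma_2(G)]\le\gamma_4(G)\}$), and $P_i=\gamma_i(G)$ for $2\le i\le m$. The degree of commutativity $l$ of $G$ is the maximum integer such that $[P_i,P_j]\le P_{i+j+l}$ for all $i,j\ge1$ if $P_1$ is not abelian (with $P_k=1$ for $k\ge m$), and $l=m-3$ if $P_1$ is abelian. Positive degree of commutativity means $l>0$.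 *)

(* Defs.v *)
From mathcomp Require Import all_boot all_fingroup all_solvable.
Set Implicit Arguments. Unset Strict Implicit. Unset Printing Implicit Defensive.
Import GroupScope.


Section Defs.
Variable gT : finGroupType.

Definition tuples_in (G : {set gT}) (n : nat) : {set {ffun 'I_n -> gT}} :=
  [set f : {ffun 'I_n -> gT} | [forall i, f i \in G]].

Definition sconj_orbit (G : {set gT}) (n : nat) (f : {ffun 'I_n -> gT})
  : {set {ffun 'I_n -> gT}} :=
  [set [ffun i => f i ^ g] | g in G].

Definition alpha (G : {set gT}) (n : nat) : nat :=
  #|[set sconj_orbit G f | f in tuples_in G n]|.

Definition P1 (G : {set gT}) : {set gT} :=
  [set g in G | [forall x in 'L_2(G), ([~ g, x])%g \in 'L_4(G)]].

Definition Pser (G : {set gT}) (i : nat) : {set gT} :=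
  if i == 0%N then G else if i == 1%N then P1 G else 'L_i(G).

Definition comm_deg_prop (G : {set gT}) (l : nat) : Prop :=
  forall i j, 1 <= i -> 1 <= j -> [~: Pser G i, Pser G j] \subset Pser G (i + j + l).

Definition is_degree_of_commutativity (G : {set gT}) (m l : nat) : Prop :=
  (abelian (P1 G) /\ l = m - 3) \/
  (~~ abelian (P1 G) /\ comm_deg_prop G l /\ forall l', comm_deg_prop G l' -> l' <= l).

End Defs.

(* Main.v *)
Require Import Defs.
From mathcomp Require Import all_boot all_fingroup all_solvable.
Set Implicit Arguments. Unset Strict Implicit. Unset Printing Implicit Defensive.
From mathcomp Require Import zify.
Set Implicit Arguments. Unset Strict Implicit. Unset Printing Implicit Defensive.
Section Burnside.
Local Open Scope group_scope.
Variable gT : finGroupType.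
Variable n : nat.

Definition sact (f : {ffun 'I_n -> gT}) (g : gT) : {ffun 'I_n -> gT} :=
  [ffun i => f i ^ g].

Lemma sact1 : sact^~ 1 =1 id.
Proof. by move=> f; apply/ffunP=> i; rewrite ffunE conjg1. Qed.
Lemma sactM f : act_morph sact f.
Proof. by move=> x y; apply/ffunP=> i; rewrite !ffunE conjgM. Qed.
Definition sconj_action := TotalAction sact1 sactM.

Lemma burnside (G : {group gT}) :
  (#|G| * alpha G n)%N = (\sum_(g in G) #|'C_G[g]| ^ n)%N.
Proof.
have acts : [acts G, on tuples_in G n | sconj_action].
  apply/actsP=> g Gg f; rewrite !inE /=.
  apply/forallP/forallP=> Hf i; have := Hf i; rewrite /sact ?ffunE.
    by rewrite groupJr.
  by move=> H; rewrite groupJr.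
rewrite /alpha.
have -> : [set sconj_orbit G f | f in tuples_in G n] = orbit sconj_action G @: tuples_in G n by [].
rewrite mulnC -(Frobenius_Cauchy acts).
apply: eq_bigr => g Gg.
have -> : 'Fix_(tuples_in G n | sconj_action)[g] = [set f | f \in ffun_on (mem 'C_G[g])].
  apply/setP=> f; rewrite in_setI [f \in tuples_in _ _]inE [RHS]inE; apply/andP/idP.
    case=> /forallP Hf /afix1P /= Hfix; apply/ffun_onP => i.
    rewrite inE Hf /=; apply/cent1P; apply/commgP; apply/conjg_fixP.
    by move: Hfix => /ffunP /(_ i); rewrite /= /sact ffunE.
  move=> /ffun_onP Hf; split.
    by apply/forallP=> i; have := Hf i; rewrite inE => /andP[].
  apply/afix1P; apply/ffunP=> i; rewrite /= /sact ffunE.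
  by have := Hf i; rewrite inE => /andP[_ /cent1P /commgP /conjg_fixP].
by rewrite cardsE card_ffun_on card_ord.
Qed.
End Burnside.
Section Helpers.
Local Open Scope group_scope.
Variable gT : finGroupType.

Lemma pidx_ge (p : nat) (H K : {group gT}) : prime p ->
  p.-group K -> H \proper K -> (p <= #|K : H|)%N.
Proof.
move=> pr pK /andP[sHK nKH].
have : p.-nat #|K : H| by apply: pnat_dvd (dvdn_indexg K H) pK.
case/p_natP=> k Ek.
have : (1 < #|K : H|)%N by rewrite indexg_gt1.
rewrite Ek; case: k {Ek} => [|k] //= _.
have p0 : (0 < p)%N by apply: prime_gt0.
by rewrite expnS -[X in (X <= _)%N]muln1 leq_mul2l expn_gt0 p0 orbT.
Qed.

Lemma proper_card_p (p : nat) (H K : {group gT}) : prime p ->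
  p.-group K -> H \proper K -> (p * #|H| <= #|K|)%N.
Proof.
move=> pr pK prHK; have sHK := proper_sub prHK.
by rewrite -(Lagrange sHK) mulnC leq_mul2l pidx_ge ?orbT.
Qed.

Lemma sub_card_eq (H K : {group gT}) : H \subset K -> (#|K| <= #|H|)%N -> H = K.
Proof. by move=> sHK le; apply/val_eqP; rewrite /= eqEcard sHK le. Qed.

Lemma memRV (K : {group gT}) a v : ([~ a, v] \in K) = ([~ v, a] \in K).
Proof. by rewrite -invgR groupV. Qed.

Lemma commset_group (A : {set gT}) (B K : {group gT}) :
  B \subset 'N(K) -> group_set [set u in B | [forall a in A, [~ u, a] \in K]].
Proof.
move=> nKB; apply/group_setP; split.
  rewrite inE group1; apply/forall_inP=> a _; by rewrite comm1g group1.
move=> u v; rewrite !inE => /andP[Bu /forall_inP Hu] /andP[Bv /forall_inP Hv].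
rewrite groupM //; apply/forall_inP=> a Aa; rewrite commMgJ groupM ?Hv //.
by rewrite memJ_norm ?Hu // (subsetP nKB).
Qed.

End Helpers.

Section MaxClass.
Local Open Scope group_scope.
Variables (gT : finGroupType) (G : {group gT}) (p m : nat).
Hypotheses (pr_p : prime p) (m4 : (4 <= m)%N) (oG : #|G| = (p ^ m)%N)
  (ncl : nil_class G = m.-1).

Lemma pG : p.-group G.
Proof. by rewrite /pgroup oG pnatX pnat_id. Qed.

Lemma nilG : nilpotent G.
Proof. exact: pgroup_nil pG. Qed.

Lemma p1 : (1 < p)%N. Proof. exact: prime_gt1. Qed.

Lemma Lm1 : 'L_m(G) = 1.
Proof.
have E : 'L_m.-1.+1(G) = 1 by apply/(lcn_nil_classP _ nilG); rewrite ncl.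
by rewrite prednK in E => //; lia.
Qed.

Lemma Lm1_nt : 'L_m.-1(G) != 1.
Proof.
apply/eqP => E.
have : (nil_class G <= m.-2)%N.
  apply/(lcn_nil_classP _ nilG); rewrite (_ : m.-2.+1 = m.-1) //; lia.
rewrite ncl; lia.
Qed.

Lemma L_nt i : (i <= m.-1)%N -> 'L_i(G) != 1.
Proof.
move=> le; apply: contra Lm1_nt => /eqP E.
by rewrite -subG1 -E lcn_sub_leq.
Qed.

Lemma pL i : p.-group 'L_i(G).
Proof. exact: pgroupS (lcn_sub i G) pG. Qed.

Lemma L2_nongen (H : {group gT}) : H \subset G -> 'L_2(G) <*> H = G -> H = G.
Proof.
move=> sHG defG.
have sL2Phi : 'L_2(G) \subset 'Phi(G) by rewrite (Phi_joing pG) lcn2 joing_subl.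
have : 'Phi(G) <*> H = G.
  apply/eqP; rewrite eqEsubset join_subG Phi_sub sHG /=.
  by rewrite -{1}defG genS // setUSS.
move/Phi_nongen; rewrite genGid => E; exact: val_inj.
Qed.

Definition a i := logn p #|'L_i(G)|.

Lemma cardL i : #|'L_i(G)| = (p ^ a i)%N.
Proof. exact: card_pgroup (pL i). Qed.

Lemma a_dec i : (1 <= i)%N -> (i <= m.-1)%N -> (a i.+1 < a i)%N.
Proof.
move=> i1 im.
have pr : 'L_i.+1(G) \proper 'L_i(G).
  case: i i1 im => // i _ im.
  rewrite lcnSn; apply: (nil_comm_properl nilG) => //; first exact: lcn_sub.
    exact: L_nt.
  by rewrite subsetI subxx lcn_norm.
have := proper_card pr; rewrite !cardL ltn_exp2l //; exact: p1.
Qed.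

Lemma a1 : a 1 = m.
Proof. by rewrite /a lcn1 oG pfactorK. Qed.

Lemma am : a m = 0%N.
Proof. by rewrite /a Lm1 cards1 logn1. Qed.

Lemma a2 : (a 2 <= m - 2)%N.
Proof.
have lt2 : (a 2 < m)%N by have := a_dec (i:=1); rewrite a1; apply; lia.
rewrite leqNgt; apply/negP => H2.
have E2 : a 2 = m.-1 by lia.
have prL2 : 'L_2(G) \proper G.
  by rewrite properEcard lcn_sub cardL oG ltn_exp2l ?p1.
have [x Gx nLx] : exists2 x, x \in G & x \notin 'L_2(G).
  case/properP: prL2 => _ [x Gx nx]; by exists x.
have sJG : 'L_2(G) <*> <[x]> \subset G by rewrite join_subG lcn_sub cycle_subG.
have prJ : 'L_2(G) \proper 'L_2(G) <*> <[x]>.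
  rewrite properE joing_subl /=; apply: contra nLx => sub.
  by apply: (subsetP sub); apply: mem_gen; rewrite inE cycle_id orbT.
have := @proper_card_p _ p 'L_2(G)%G ('L_2(G) <*> <[x]>)%G pr_p (pgroupS sJG pG) prJ.
rewrite cardL E2 -expnS prednK; last by lia.
rewrite -oG => le.
have EJ : ('L_2(G) <*> <[x]>)%G = G by apply: sub_card_eq.
have Ex : <[x]>%G = G.
  apply: L2_nongen; first by rewrite cycle_subG.
  by have := congr1 val EJ.
have abG : abelian G by rewrite -Ex /= cycle_abelian.
have : (2 <= m.-1)%N by lia.
by move/L_nt; rewrite lcn2 (derG1P abG) eqxx.
Qed.

Lemma a_lo k : (k <= m - 2)%N -> (k <= a (m - k))%N.
Proof.
elim: k => [|k IH] le; first by [].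
have := a_dec (i := m - k.+1); rewrite (_ : (m - k.+1).+1 = m - k); last by lia.
move=> H; apply: leq_ltn_trans (IH _) (H _ _); lia.
Qed.

Lemma a_hi k : (k <= m - 2)%N -> (a (2 + k) + k <= m - 2)%N.
Proof.
elim: k => [|k IH] le; first by rewrite addn0 a2.
have H := a_dec (i := 2 + k) ltac:(lia) ltac:(lia).
rewrite (_ : (2+k).+1 = 2 + k.+1) in H; last by lia.
have := IH (ltnW le); lia.
Qed.

Lemma aE i : (2 <= i)%N -> (i <= m)%N -> a i = (m - i)%N.
Proof.
move=> i2 im.
have h1 := a_lo (k := m - i); rewrite (_ : m - (m - i) = i) in h1; last by lia.
have h2 := a_hi (k := i - 2); rewrite (_ : 2 + (i - 2) = i) in h2; last by lia.
have := h1 ltac:(lia); have := h2 ltac:(lia); lia.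
Qed.

Lemma cardLi i : (2 <= i)%N -> (i <= m)%N -> #|'L_i(G)| = (p ^ (m - i))%N.
Proof. by move=> *; rewrite cardL aE. Qed.


Lemma L_norm i j : 'L_i(G) \subset 'N('L_j(G)).
Proof. exact: subset_trans (lcn_sub i G) (lcn_norm j G). Qed.

Lemma idx_L i j : (2 <= i)%N -> (i <= j)%N -> (j <= m)%N ->
  #|'L_i(G) : 'L_j(G)| = (p ^ (j - i))%N.
Proof.
move=> i2 ij jm; have := Lagrange (lcn_sub_leq G ij).
rewrite !cardLi //; try lia.
rewrite (_ : m - i = (m - j) + (j - i))%N; last by lia.
rewrite expnD => /eqP; rewrite eqn_pmul2l ?expn_gt0 ?prime_gt0 // => /eqP.
by [].
Qed.

Lemma L_between i (U : {group gT}) : (2 <= i)%N -> (i < m)%N ->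
  'L_i.+1(G) \subset U -> U \subset 'L_i(G) -> ~~ (U \subset 'L_i.+1(G)) ->
  U :=: 'L_i(G).
Proof.
move=> i2 im sLU sUL nUL.
have pr : 'L_i.+1(G) \proper U by rewrite properE sLU.
have := @proper_card_p _ p 'L_i.+1(G)%G U pr_p (pgroupS sUL (pL i)) pr.
rewrite cardLi //; try lia.
rewrite -expnS (_ : (m - i.+1).+1 = m - i)%N; last by lia.
rewrite -cardLi //; try lia.
by move=> le; have := sub_card_eq sUL le => ->.
Qed.

Lemma commG_el (A B : {set gT}) (K : {group gT}) :
  (forall a b, a \in A -> b \in B -> [~ a, b] \in K) -> [~: A, B] \subset K.
Proof.
move=> H; rewrite gen_subG; apply/subsetP=> _ /imset2P[a b Aa Bb ->]; exact: H.
Qed.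

Lemma L2L2 : [~: 'L_2(G), 'L_2(G)] \subset 'L_4(G).
Proof.
have nL := L_norm 2 4.
have ab : abelian ('L_2(G) / 'L_4(G))%G.
  apply: (card_p2group_abelian pr_p); rewrite /= card_quotient // idx_L //; lia.
exact: der1_min nL ab.
Qed.

Lemma P1_group : group_set (P1 G).
Proof. by apply: commset_group; exact: lcn_norm. Qed.

Canonical P1g := Group P1_group.

Lemma P1_sub : P1 G \subset G.
Proof. by apply/subsetP=> g; rewrite inE => /andP[]. Qed.

Lemma L2_P1 : 'L_2(G) \subset P1 G.
Proof.
apply/subsetP=> g Lg; rewrite inE (subsetP (lcn_sub 2 G)) //=.
apply/forall_inP=> y Ly; apply: (subsetP L2L2); exact: mem_commg.
Qed.

Lemma L3_lt_L4 : ~~ ('L_3(G) \subset 'L_4(G)).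
Proof.
apply/negP=> /subset_leq_card; rewrite !cardLi //; try lia.
rewrite leq_exp2l ?p1 //; lia.
Qed.

Lemma P1_ne : ~~ (G \subset P1 G).
Proof.
apply/negP=> sGP; move/negP: L3_lt_L4; apply.
rewrite (lcnSn 1) /=; apply: commG_el => a g La Gg.
have := subsetP sGP g Gg; rewrite inE => /andP[_ /forall_inP H].
by rewrite memRV H.
Qed.

Lemma P1_idx : (#|G : P1 G| <= p)%N.
Proof.
have prL : 'L_3(G) \proper 'L_2(G).
  rewrite properEcard lcn_subS !cardLi //; try lia.
  rewrite ltn_exp2l ?p1 //; lia.
have [_ [x Lx nLx]] := properP prL.
set X := x *: 'L_4(G).
have XJ g : g \in G -> X :^ g = (x ^ g) *: 'L_4(G).
  move=> Gg; rewrite /X conjsMg conjg_set1; congr (_ * _).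
  by apply/normP; apply: (subsetP (lcn_norm 4 G)).
have sCP : 'C_G[X | 'Js] \subset P1 G.
  apply/subsetP=> g; rewrite inE astab1Js => /andP[Gg /normP].
  rewrite XJ // => E.
  have : x ^ g \in X by rewrite -E lcoset_refl.
  rewrite mem_lcoset -commgEl => Rxg.
  rewrite inE Gg /=.
  set U := [set u in 'L_2(G) | [forall a in [set g], [~ u, a] \in 'L_4(G)]].
  have gU : group_set U by apply: commset_group; apply: L_norm.
  have EU : Group gU :=: 'L_2(G).
    apply: L_between => //=.
    - lia.
    - apply/subsetP=> u Lu; rewrite inE (subsetP (lcn_subS 2 G)) //=.
      apply/forall_inP=> a /set1P ->; rewrite (lcnSn 2).
      exact: mem_commg.
    - by apply/subsetP=> u; rewrite inE => /andP[].
    - apply/negP=> /subsetP /(_ x); rewrite inE Lx /= => H.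
      by move/negP: nLx; apply; apply: H; apply/forall_inP=> a /set1P ->.
  apply/forall_inP=> y Ly; rewrite memRV.
  have : y \in Group gU by rewrite EU.
  by rewrite inE => /andP[_ /forall_inP /(_ g (set11 g))].
have := indexgS G sCP; move/dvdn_leq; rewrite -card_orbit => le.
apply: leq_trans (le _) _; first by rewrite card_orbit indexg_gt0.
have sO : orbit 'Js G X \subset [set x *: C | C in lcosets 'L_4(G) 'L_3(G)].
  apply/subsetP=> _ /imsetP[g Gg ->]; rewrite /= XJ // conjg_mulR lcosetM.
  apply: imset_f; rewrite mem_lcosets; apply: (subsetP (mulg_subl _ _)) => //.
  by rewrite (lcnSn 1); apply: mem_commg.
apply: leq_trans (subset_leq_card sO) _; apply: leq_trans (leq_imset_card _ _) _.
by rewrite card_lcosets idx_L.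
Qed.

Lemma P1_card : #|P1 G| = (p ^ m.-1)%N.
Proof.
have prP : P1g \proper G by rewrite properE P1_sub P1_ne.
have := pidx_ge pr_p pG prP => ge.
have Eidx : #|G : P1g| = p by apply/eqP; rewrite eqn_leq P1_idx ge.
have := Lagrange P1_sub; rewrite Eidx oG -{1}(prednK (_ : 0 < m)%N); last by lia.
rewrite expnSr => /eqP; rewrite eqn_mul2r => /orP[/eqP p0|/eqP //].
by have := prime_gt0 pr_p; rewrite p0.
Qed.

Lemma PserE j : (2 <= j)%N -> Pser G j = 'L_j(G).
Proof. by rewrite /Pser; case: j => [|[|j]]. Qed.

Lemma Pser1 : Pser G 1 = P1 G.
Proof. by []. Qed.

Lemma deg_hdeg : (exists l, is_degree_of_commutativity G m l /\ (0 < l)%N) ->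
  forall j, (2 <= j)%N -> [~: P1 G, 'L_j(G)] \subset 'L_j.+2(G).
Proof.
move=> [l [[[abP _] | [_ [cdp _]]] l0]] j j2.
  have -> : [~: P1 G, 'L_j(G)] = 1.
    apply/commG1P; apply: subset_trans abP (centS _).
    exact: subset_trans (lcn_sub_leq G j2) L2_P1.
  exact: sub1G.
have := cdp 1%N j isT (ltnW j2); rewrite Pser1 !PserE //; last by lia.
move/subset_trans; apply; apply: lcn_sub_leq; lia.
Qed.

Hypothesis hdeg : forall j, (2 <= j)%N -> [~: P1 G, 'L_j(G)] \subset 'L_j.+2(G).

Lemma P1_ext (T : {group gT}) : P1 G \subset T -> T \subset G -> ~~ (T \subset P1 G) ->
  T = G.
Proof.
move=> sPT sTG nTP.
have pr : P1g \proper T by rewrite properE sPT.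
have := @proper_card_p _ p P1g T pr_p (pgroupS sTG pG) pr.
rewrite P1_card -expnS prednK; last by lia.
by rewrite -oG => le; apply: sub_card_eq.
Qed.

Lemma D_step s i y : s \in G -> s \notin P1 G -> (2 <= i)%N -> (i <= m - 2)%N ->
  y \in 'L_i(G) -> [~ y, s] \in 'L_i.+2(G) -> y \in 'L_i.+1(G).
Proof.
move=> Gs nPs i2 im Ly Rys.
set T := [set g in G | [forall a in [set y], [~ g, a] \in 'L_i.+2(G)]].
have gT_ : group_set T by apply: commset_group; apply: lcn_norm.
have ET : Group gT_ = G.
  apply: P1_ext.
  - apply/subsetP=> g Pg; rewrite inE (subsetP P1_sub) //=.
    apply/forall_inP=> a /set1P ->; apply: (subsetP (hdeg i2)).
    exact: mem_commg.
  - by apply/subsetP=> g; rewrite inE => /andP[].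
  - apply/negP=> /subsetP /(_ s); rewrite inE Gs /= => H.
    by move/negP: nPs; apply; apply: H; apply/forall_inP=> a /set1P ->; rewrite memRV.
apply: contraT => nLy.
set U := [set u in 'L_i(G) | [forall g in G, [~ u, g] \in 'L_i.+2(G)]].
have gU : group_set U by apply: commset_group; apply: L_norm.
have EU : Group gU :=: 'L_i(G).
  apply: L_between => //=.
  - lia.
  - apply/subsetP=> u Lu; rewrite inE (subsetP (lcn_subS i G)) //=.
    apply/forall_inP=> g Gg; rewrite (lcnSn i).
    exact: mem_commg.
  - by apply/subsetP=> u; rewrite inE => /andP[].
  - apply/negP=> /subsetP /(_ y); rewrite inE Ly /= => H.
    move/negP: nLy; apply; apply: H; apply/forall_inP=> g Gg.
    have : g \in Group gT_ by rewrite ET.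
    by rewrite inE => /andP[_ /forall_inP /(_ y (set11 y))]; rewrite memRV.
have : 'L_i.+1(G) \subset 'L_i.+2(G).
  have := lcnSn i.-1 G; rewrite prednK; last by lia.
  move=> ->; apply: commG_el => u g Lu Gg.
  have : u \in Group gU by rewrite EU.
  by rewrite inE => /andP[_ /forall_inP /(_ g Gg)].
move/subset_leq_card; rewrite !cardLi; try lia.
rewrite leq_exp2l ?p1 //; lia.
Qed.

Lemma D_lemma s y : s \in G -> s \notin P1 G -> y \in 'L_2(G) -> commute y s ->
  y \in 'L_m.-1(G).
Proof.
move=> Gs nPs Ly cys.
suff H : forall k, (k <= m - 3)%N -> y \in 'L_(2 + k)(G).
  by have := H (m - 3)%N (leqnn _); rewrite (_ : 2 + (m - 3) = m.-1)%N //; lia.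
elim=> [|k IH] le; first by [].
rewrite (_ : 2 + k.+1 = (2 + k).+1)%N //.
apply: (D_step Gs nPs) => //; first lia.
  apply: IH; lia.
by have /commgP/eqP -> := cys; exact: group1.
Qed.

Lemma notabG : ~~ abelian G.
Proof.
apply/negP=> abG; have : (2 <= m.-1)%N by lia.
by move/L_nt; rewrite lcn2 (derG1P abG) eqxx.
Qed.

Lemma max_ext (H T : {group gT}) : #|H| = (p ^ m.-1)%N -> H \subset T ->
  T \subset G -> ~~ (T \subset H) -> T = G.
Proof.
move=> oH sHT sTG nTH.
have pr : H \proper T by rewrite properE sHT.
have := @proper_card_p _ p H T pr_p (pgroupS sTG pG) pr.
rewrite oH -expnS prednK; last by lia.
by rewrite -oG => le; apply: sub_card_eq.
Qed.

Lemma Lm1_cent : 'L_m.-1(G) \subset 'C(G).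
Proof.
have E := lcnSn m.-2 G.
have e1 : m.-2.+2 = m by lia.
have e2 : m.-2.+1 = m.-1 by lia.
rewrite e1 e2 in E.
by apply/commG1P; rewrite -E Lm1.
Qed.

Lemma card_Lm1 : #|'L_m.-1(G)| = p.
Proof.
have e : (m - m.-1 = 1)%N by lia.
by rewrite cardLi ?e ?expn1 //; lia.
Qed.

Lemma Lm1_P1 : 'L_m.-1(G) \subset P1 G.
Proof. apply: subset_trans L2_P1; apply: lcn_sub_leq; lia. Qed.

Lemma Lm1_sub_cent s : s \in G -> 'L_m.-1(G) \subset 'C_G[s].
Proof.
move=> Gs; apply/subsetP=> z Lz; rewrite in_setI (subsetP (lcn_sub m.-1 G) z Lz) /=.
by apply/cent1P; move/centP: (subsetP Lm1_cent z Lz); apply.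
Qed.

Lemma cent_out s : s \in G -> s \notin P1 G -> #|'C_G[s]| = (p ^ 2)%N.
Proof.
move=> Gs nPs.
have sLC := Lm1_sub_cent Gs.
have sC : s \in 'C_G[s] by rewrite in_setI Gs /=; apply/cent1P; exact: commute_refl.
have nsL : s \notin 'L_m.-1(G) by apply: contra nPs; apply: (subsetP Lm1_P1).
have nsL2 : s \notin 'L_2(G) by apply: contra nPs; apply: (subsetP L2_P1).
have lower : (p * p <= #|'C_G[s]|)%N.
  have pr : 'L_m.-1(G) \proper 'C_G[s].
    rewrite properE sLC /=; apply/negP=> /subsetP /(_ s sC); exact/negP.
  have := @proper_card_p _ p 'L_m.-1(G)%G 'C_G[s]%G pr_p (pgroupS (subsetIl _ _) pG) pr.
  by rewrite card_Lm1.
set J := ('L_2(G) <*> <[s]>)%G.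
have sJG : J \subset G by rewrite join_subG lcn_sub cycle_subG.
have sLJ : 'L_2(G) \subset J by apply: joing_subl.
have sJ : s \in J by apply: mem_gen; rewrite inE cycle_id orbT.
have nJG : ~~ (G \subset J).
  apply/negP=> sGJ; have EJ : J = G by apply/val_eqP; rewrite eqEsubset sJG sGJ.
  have Es : <[s]>%G = G.
    apply: L2_nongen; first by rewrite cycle_subG.
    by have := congr1 val EJ.
  by move/negP: notabG; apply; rewrite -Es /= cycle_abelian.
have oJ : #|J| = (p ^ m.-1)%N.
  have pr1 : 'L_2(G) \proper J.
    rewrite properE sLJ /=; apply/negP=> /subsetP /(_ s sJ); exact/negP.
  have le1 := @proper_card_p _ p 'L_2(G)%G J pr_p (pgroupS sJG pG) pr1.
  have pr2 : J \proper G by rewrite properE sJG.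
  have le2 := @proper_card_p _ p J G pr_p pG pr2.
  have e1 : m = m.-1.+1 by clear -m4; lia.
  have e2 : (m - 2).+1 = m.-1 by clear -m4; lia.
  have c2 : #|'L_2(G)| = (p ^ (m - 2))%N by apply: cardLi; clear -m4; lia.
  rewrite c2 -expnS e2 in le1.
  have pm : (p ^ m = p * p ^ m.-1)%N by rewrite -expnS -e1.
  rewrite oG pm leq_pmul2l ?prime_gt0 // in le2.
  by apply/eqP; rewrite eqn_leq le1 le2.
have sCJ : 'C_G[s] \subset J.
  apply/subsetP=> y Cy; apply: contraT => nJy.
  move: Cy; rewrite in_setI => /andP[Gy /cent1P csy].
  set K := (<[s]> <*> <[y]>)%G.
  have abK : abelian K.
    rewrite /= abelianY !cycle_abelian /= cent_cycle cycle_subG.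
    by apply/cent1P.
  have sKG : K \subset G by rewrite join_subG !cycle_subG Gs Gy.
  have yK : y \in K by apply: mem_gen; rewrite inE cycle_id orbT.
  have sK : s \in K by apply: mem_gen; rewrite inE cycle_id.
  have EJy : (J <*> <[y]>)%G = G.
    apply: (max_ext oJ) => /=.
    - exact: joing_subl.
    - by rewrite join_subG sJG cycle_subG.
    - apply/negP=> /subsetP /(_ y); rewrite (mem_gen (x:=y)) ?inE ?cycle_id ?orbT //.
      by move=> H; move/negP: nJy; apply; apply: H.
  have EK : K = G.
    apply: L2_nongen => //; apply/eqP; rewrite eqEsubset join_subG lcn_sub sKG /=.
    rewrite -{1}EJy /= join_subG cycle_subG (subsetP (joing_subr _ _)) // andbT.
    by rewrite join_subG joing_subl /= cycle_subG (subsetP (joing_subr _ _)) //.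
  by have := notabG; rewrite -EK abK.
have sCL : 'C_G[s] :&: 'L_2(G) \subset 'L_m.-1(G).
  apply/subsetP=> y; rewrite !in_setI => /andP[/andP[Gy /cent1P csy] Ly].
  exact: (D_lemma Gs nPs Ly csy).
have upper : (#|'C_G[s]| <= p * p)%N.
  have E := mul_cardG 'C_G[s]%G 'L_2(G)%G.
  have h1 : (#|('C_G[s] * 'L_2(G))%g| <= p ^ m.-1)%N.
    by rewrite -oJ subset_leq_card // mulG_subG sCJ sLJ.
  have h2 : (#|'C_G[s] :&: 'L_2(G)| <= p)%N.
    by rewrite -card_Lm1 subset_leq_card.
  have c2 : #|'L_2(G)| = (p ^ (m - 2))%N by apply: cardLi; clear -m4; lia.
  have e2 : (m - 2).+1 = m.-1 by clear -m4; lia.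
  rewrite c2 in E.
  have : (#|'C_G[s]| * p ^ (m - 2) <= (p * p) * p ^ (m - 2))%N.
    rewrite E -mulnA -expnS e2.
    by rewrite mulnC leq_mul.
  by rewrite leq_pmul2r ?expn_gt0 ?prime_gt0.
by apply/eqP; rewrite eqn_leq upper lower.
Qed.

Lemma P1_cent_out s : s \in G -> s \notin P1 G ->
  P1 G :&: 'C_G[s] \subset 'L_m.-1(G).
Proof.
move=> Gs nPs.
set H := (P1g :&: 'C_G[s])%G.
have sLH : 'L_m.-1(G) \subset H by rewrite subsetI Lm1_P1 Lm1_sub_cent.
have sHC : H \subset 'C_G[s] by apply: subsetIr.
have sC : s \in 'C_G[s] by rewrite in_setI Gs /=; apply/cent1P; exact: commute_refl.
have pr : H \proper 'C_G[s].
  rewrite properE sHC /=; apply/negP=> /subsetP.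
  by move/(_ s sC); rewrite inE (negPf nPs).
have := @proper_card_p _ p H 'C_G[s]%G pr_p (pgroupS (subsetIl _ _) pG) pr.
rewrite cent_out // expnS leq_pmul2l ?prime_gt0 // expn1 => le.
have EH : 'L_m.-1(G)%G = H by apply: sub_card_eq; rewrite // card_Lm1.
by rewrite -[P1 G :&: _]/(gval H) -EH.
Qed.

Lemma exists_out : exists2 s, s \in G & s \notin P1 G.
Proof.
have := P1_ne; case/subsetPn => s Gs nPs; by exists s.
Qed.

Lemma cent_in_P1 x : x \in P1 G -> x \notin 'L_m.-1(G) -> 'C_G[x] \subset P1 G.
Proof.
move=> Px nLx; apply/subsetP=> s; rewrite in_setI => /andP[Gs /cent1P csx].
have [//|nPs] := boolP (s \in P1 G); exfalso; move/negP: nLx; apply.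
apply: (subsetP (P1_cent_out Gs nPs)); rewrite !in_setI Px (subsetP P1_sub) //=.
by apply/cent1P; apply: commute_sym.
Qed.

Lemma cent_Lm1 x : x \in 'L_m.-1(G) -> #|'C_G[x]| = (p ^ m)%N.
Proof.
move=> Lx; rewrite -oG; suff -> : 'C_G[x] = G by [].
apply/setIidPl; apply/subsetP=> g Gg.
apply/cent1P; apply: commute_sym; move/centP: (subsetP Lm1_cent x Lx); apply => //.
Qed.

Lemma cent_full x : x \in P1 G -> #|'C_G[x]| = (p ^ m)%N -> x \in 'L_m.-1(G).
Proof.
move=> Px oC; have [//|nLx] := boolP (x \in 'L_m.-1(G)); exfalso.
have := cent_in_P1 Px nLx => /subset_leq_card; rewrite oC P1_card leq_exp2l ?p1 //.
by clear -m4; lia.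
Qed.

Definition fC n g := (#|'C_G[g]| ^ n)%N.

Lemma sum_out n : (\sum_(g in G :\: P1 G) fC n g = (p ^ m - p ^ m.-1) * p ^ (2 * n))%N.
Proof.
rewrite (eq_bigr (fun _ => p ^ (2 * n))%N); last first.
  move=> g; rewrite inE => /andP[nPg Gg]; by rewrite /fC cent_out // expnM.
by rewrite sum_nat_const cardsD (setIidPr P1_sub) oG P1_card.
Qed.

Lemma sum_split n : (\sum_(g in G) fC n g =
   \sum_(g in P1 G) fC n g + \sum_(g in G :\: P1 G) fC n g)%N.
Proof. by rewrite (big_setID (P1 G)) /= (setIidPr P1_sub). Qed.

Lemma case1 n : abelian (P1 G) ->
  (\sum_(g in G) fC n g = p * p ^ (m * n) + (p ^ m - p ^ m.-1) * p ^ (2 * n)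
       + (p ^ m.-1 - p) * p ^ (m.-1 * n))%N.
Proof.
move=> abP; rewrite sum_split sum_out (big_setID 'L_m.-1(G)) /=.
rewrite (setIidPr Lm1_P1).
rewrite (eq_bigr (fun _ => p ^ (m * n))%N); last first.
  by move=> g Lg; rewrite /fC cent_Lm1 // expnM.
rewrite (eq_bigr (fun _ => p ^ (m.-1 * n))%N (P := fun g => g \in P1 G :\: 'L_m.-1(G))); last first.
  move=> g; rewrite inE => /andP[nLg Pg].
  rewrite /fC expnM -P1_card; suff -> : 'C_G[g] = P1 G by [].
  apply/setP/subset_eqP/andP; split; first exact: cent_in_P1.
  apply/subsetP=> y Py; rewrite in_setI (subsetP P1_sub) //=.
  by apply/cent1P; move/centsP: abP; apply.
rewrite !sum_nat_const cardsD (setIidPr Lm1_P1) P1_card card_Lm1.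
by rewrite addnAC.
Qed.

Section Case2.
Hypothesis cP13 : [~: P1 G, 'L_3(G)] = 1.
Hypothesis nabP : ~~ abelian (P1 G).

Lemma L3_P1 : 'L_3(G) \subset P1 G.
Proof. apply: subset_trans L2_P1; apply: lcn_sub_leq; by []. Qed.

Lemma Lm1_L3 : 'L_m.-1(G) \subset 'L_3(G).
Proof. apply: lcn_sub_leq; by clear -m4; lia. Qed.

Lemma cPL3 : P1 G \subset 'C('L_3(G)).
Proof. by apply/commG1P. Qed.

Lemma cent_mid x : x \in P1 G -> x \notin 'L_3(G) -> #|'C_G[x]| = (p ^ (m - 2))%N.
Proof.
move=> Px nLx.
have nLm : x \notin 'L_m.-1(G) by apply: contra nLx; apply: (subsetP Lm1_L3).
have sCP := cent_in_P1 Px nLm.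
have xC : x \in 'C_G[x] by rewrite in_setI (subsetP P1_sub) //=; apply/cent1P; exact: commute_refl.
have sL3C : 'L_3(G) \subset 'C_G[x].
  apply/subsetP=> y Ly; rewrite in_setI (subsetP (lcn_sub 3 G) y Ly) /=.
  by apply/cent1P; apply: commute_sym; move/centP: (subsetP cPL3 x Px); apply.
have c3 : #|'L_3(G)| = (p ^ (m - 3))%N by apply: cardLi; clear -m4; lia.
have e3 : (m - 3).+1 = m - 2 by clear -m4; lia.
have e2 : (m - 2).+1 = m.-1 by clear -m4; lia.
have lower : (p ^ (m - 2) <= #|'C_G[x]|)%N.
  have pr : 'L_3(G) \proper 'C_G[x].
    rewrite properE sL3C /=; apply/negP=> /subsetP /(_ x xC); exact/negP.
  have := @proper_card_p _ p 'L_3(G)%G 'C_G[x]%G pr_p (pgroupS (subsetIl _ _) pG) pr.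
  by rewrite c3 -expnS e3.
have nPC : ~~ (P1 G \subset 'C_G[x]).
  apply/negP=> sPC.
  have sL3Z : 'L_3(G) \subset 'Z(P1 G).
    by rewrite subsetI L3_P1 centsC cPL3.
  have xZ : x \in 'Z(P1 G).
    rewrite in_setI Px /=; apply/centP=> y Py.
    have := subsetP sPC y Py; rewrite in_setI => /andP[_ /cent1P]; exact: commute_sym.
  have prZ : 'L_3(G) \proper 'Z(P1 G).
    rewrite properE sL3Z /=; apply/negP=> /subsetP /(_ x xZ); exact/negP.
  have := @proper_card_p _ p 'L_3(G)%G 'Z(P1g)%G pr_p (pgroupS (center_sub _) (pgroupS P1_sub pG)) prZ.
  rewrite c3 -expnS e3 => leZ.
  have sZP : 'Z(P1g) \subset P1g by apply: center_sub.
  have L := Lagrange sZP.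
  have idx_le : (#|P1g : 'Z(P1g)| <= p)%N.
    have : (p ^ (m - 2) * #|P1g : 'Z(P1g)| <= p ^ (m - 2) * p)%N.
      apply: leq_trans (leq_mul leZ (leqnn _)) _.
      by rewrite L /= P1_card -e2 expnS mulnC.
    by rewrite leq_pmul2l ?expn_gt0 ?prime_gt0.
  move/negP: nabP; apply.
  have [le1|gt1] := leqP #|P1g : 'Z(P1g)| 1.
    apply/center_idP; apply/eqP; rewrite eqEcard center_sub /=.
    have : #|P1g : 'Z(P1g)| = 1%N by apply/eqP; rewrite eqn_leq le1 indexg_gt0.
    by move=> E1; rewrite -L E1 muln1.
  apply: cyclic_center_factor_abelian; apply: prime_cyclic.
  rewrite card_quotient; last by apply: normal_norm; apply: center_normal.
  have prZP : 'Z(P1g) \proper P1g by rewrite properE sZP /= -indexg_gt1.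
  have := pidx_ge pr_p (pgroupS P1_sub pG) prZP => ge.
  by have -> : #|P1g : 'Z(P1g)| = p by apply/eqP; rewrite eqn_leq idx_le ge.
have upper : (#|'C_G[x]| <= p ^ (m - 2))%N.
  have pr : 'C_G[x] \proper P1g by rewrite properE sCP.
  have := @proper_card_p _ p 'C_G[x]%G P1g pr_p (pgroupS P1_sub pG) pr.
  by rewrite P1_card -e2 expnS leq_pmul2l ?prime_gt0.
by apply/eqP; rewrite eqn_leq upper lower.
Qed.

Lemma cent_L3 x : x \in 'L_3(G) -> x \notin 'L_m.-1(G) -> 'C_G[x] = P1 G.
Proof.
move=> Lx nLm.
have Px : x \in P1 G by apply: (subsetP L3_P1).
apply/setP/subset_eqP/andP; split; first exact: cent_in_P1.
apply/subsetP=> y Py; rewrite in_setI (subsetP P1_sub) //=.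
by apply/cent1P; move/centP: (subsetP cPL3 y Py); apply.
Qed.

Lemma case2 n :
  (\sum_(g in G) fC n g = p * p ^ (m * n) + (p ^ m - p ^ m.-1) * p ^ (2 * n)
       + (p ^ m.-1 - p ^ (m - 3)) * p ^ ((m - 2) * n)
       + (p ^ (m - 3) - p) * p ^ (m.-1 * n))%N.
Proof.
rewrite sum_split sum_out (big_setID 'L_3(G)) /= (setIidPr L3_P1).
rewrite (big_setID 'L_m.-1(G)) /= (setIidPr Lm1_L3).
rewrite (eq_bigr (fun _ => p ^ (m * n))%N); last first.
  by move=> g Lg; rewrite /fC cent_Lm1 // expnM.
rewrite (eq_bigr (fun _ => p ^ (m.-1 * n))%N (P := fun g => g \in 'L_3(G) :\: 'L_m.-1(G))); last first.
  move=> g; rewrite inE => /andP[nLg Lg].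
  by rewrite /fC expnM cent_L3 // P1_card.
rewrite (eq_bigr (fun _ => p ^ ((m - 2) * n))%N (P := fun g => g \in P1 G :\: 'L_3(G))); last first.
  move=> g; rewrite inE => /andP[nLg Pg].
  by rewrite /fC expnM cent_mid.
rewrite !sum_nat_const !cardsD (setIidPr Lm1_L3) (setIidPr L3_P1) P1_card card_Lm1.
have c3 : #|'L_3(G)| = (p ^ (m - 3))%N by apply: cardLi; clear -m4; lia.
rewrite c3.
move: (p * _)%N (_ * p ^ (m.-1 * n))%N (_ * p ^ ((m-2) * n))%N ((p ^ m - _) * _)%N.
by move=> *; lia.
Qed.
End Case2.

Lemma P1_maximal : maximal P1g G.
Proof.
apply: p_index_maximal; first exact: P1_sub.
have := Lagrange P1_sub; rewrite /= P1_card oG.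
have e1 : m = m.-1.+1 by clear -m4; lia.
have pm : (p ^ m = p ^ m.-1 * p)%N by rewrite -expnSr -e1.
rewrite pm => /eqP; rewrite eqn_pmul2l ?expn_gt0 ?prime_gt0 //.
by move/eqP ->.
Qed.

Lemma max_ab_P1 (A : {group gT}) : maximal A G -> abelian A -> abelian (P1 G).
Proof.
move=> maxA abA.
have sAG : A \subset G by apply: proper_sub; apply: (maxgroupp maxA).
have sL2A : 'L_2(G) \subset A.
  apply: subset_trans (Phi_sub_max maxA).
  by rewrite (Phi_joing pG) lcn2 joing_subl.
have sAP : A \subset P1 G.
  apply/subsetP=> a Aa; rewrite inE (subsetP sAG) //=.
  apply/forall_inP=> y Ly.
  have Ay := subsetP sL2A y Ly.
  have /commgP/eqP -> : commute a y by move/centsP: abA; apply.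
  exact: group1.
have oA : #|A| = (p ^ m.-1)%N.
  have := Lagrange sAG; rewrite (p_maximal_index pG maxA) oG.
  have e1 : m = m.-1.+1 by clear -m4; lia.
  have pm : (p ^ m = p ^ m.-1 * p)%N by rewrite -expnSr -e1.
  rewrite pm => /eqP; rewrite eqn_pmul2r ?prime_gt0 //.
  by move/eqP.
have EA : A = P1g by apply: sub_card_eq; rewrite // oA P1_card.
by rewrite -[P1 G]/(gval P1g) -EA.
Qed.
End MaxClass.

Unset Implicit Arguments.

Theorem theorem7p6 (gT : finGroupType) (G : {group gT}) (p m : nat) :
  prime p -> 4 <= m -> #|G| = p ^ m -> nil_class G = m.-1 ->
  (exists l, is_degree_of_commutativity G m l /\ 0 < l) ->
  ((exists A : {group gT}, maximal A G /\ abelian A) ->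
     forall n, p ^ m * alpha G n =
       p * p ^ (m * n) + (p ^ m - p ^ m.-1) * p ^ (2 * n)
       + (p ^ m.-1 - p) * p ^ (m.-1 * n)) /\
  ([~: Pser G 1, Pser G 3]%g = 1%g ->
   (forall A : {group gT}, maximal A G -> ~~ abelian A) ->
     forall n, p ^ m * alpha G n =
       p * p ^ (m * n) + (p ^ m - p ^ m.-1) * p ^ (2 * n)
       + (p ^ m.-1 - p ^ (m - 3)) * p ^ ((m - 2) * n)
       + (p ^ (m - 3) - p) * p ^ (m.-1 * n)).
Proof.
move=> pr m4 oG ncl hd.
have hdeg := deg_hdeg pr m4 oG ncl hd.
have bs : forall n, p ^ m * alpha G n = \sum_(g in G) fC G n g.
  by move=> n; rewrite -oG burnside.
split.
- move=> [A [maxA abA]] n; rewrite bs; apply: (case1 pr m4 oG ncl hdeg).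
  exact: (max_ab_P1 pr m4 oG ncl maxA abA).
- move=> cP13 nomax n; rewrite bs; apply: (case2 pr m4 oG ncl hdeg).
  + by rewrite -(Pser1 G) -(PserE G (j:=3)).
  + exact: nomax (P1g G) (P1_maximal pr m4 oG ncl).
Qed.
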